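(* Let $\mathcal{M}=[0,1]^2\subset\mathbb{R}^2$ with the Euclidean metric, let $k\ge 2$ be an integer, and let $P\subset\mathcal{M}$ be any set of $k$ points. Then $$GR_P\ \ge\ \frac{2}{\sqrt{3}}-\frac{C}{\sqrt{k}},\qquad\text{where } C=\frac{2^{3/2}}{3^{3/4}}.$$
   Context: For a metric space $(\mathcal{M},\delta)$ and a finite set $P\subset\mathcal{M}$ with $|P|\ge 2$, define $r_P=\min_{p,q\in P,\,p\neq q}\delta(p,q)/2$, $R_P=\sup_{x\in\mathcal{M}}\min_{p\in P}\delta(x,p)$, and the gap ratio $GR_P=R_P/r_P$. *)

(* Defs.v *)
From mathcomp Require Import all_boot all_order all_algebra.
From mathcomp Require Import all_classical all_reals exp.
Set Implicit Arguments. Unset Strict Implicit. Unset Printing Implicit Defensive.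
Import Order.TTheory GRing.Theory Num.Theory.
Local Open Scope classical_set_scope.
Local Open Scope ring_scope.

Section GapRatio.
Variable R : realType.

Definition dist2 (x y : R * R) : R :=
  Num.sqrt ((x.1 - y.1) ^+ 2 + (x.2 - y.2) ^+ 2).

Definition unit_square : set (R * R) :=
  [set x | 0 <= x.1 <= 1 /\ 0 <= x.2 <= 1].

(* r_P = min_{p <> q in P} dist(p,q) / 2, where P = {p i | i < k}, p injective *)
Definition r_P (k : nat) (p : 'I_k -> R * R) : R :=
  inf [set d | exists i j : 'I_k, i != j /\ d = dist2 (p i) (p j) / 2].

Definition dist_to_P (k : nat) (p : 'I_k -> R * R) (x : R * R) : R :=
  inf [set d | exists i : 'I_k, d = dist2 x (p i)].

Definition R_P (k : nat) (p : 'I_k -> R * R) : R :=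
  sup [set d | exists x, unit_square x /\ d = dist_to_P p x].

Definition GR (k : nat) (p : 'I_k -> R * R) : R := R_P p / r_P p.
End GapRatio.

(* Main.v *)
Require Import Defs.
From mathcomp Require Import all_boot all_order all_algebra.
From mathcomp Require Import all_classical all_reals exp.
From mathcomp Require Import ring lra.
Import Order.TTheory GRing.Theory Num.Theory.
Local Open Scope ring_scope.
Section S. Variable R : realType.
Lemma key (e a z1 z2 w1 w2 : R) : e ^+ 2 = 1 -> a ^+ 2 * 3 = 1 ->
  4 * (w1 ^+ 2 + w2 ^+ 2) <= (z1 + w1) ^+ 2 + (z2 + w2) ^+ 2 ->
  4 * (w1 ^+ 2 + w2 ^+ 2) <= (z1 - w1) ^+ 2 + (z2 - w2) ^+ 2 ->
  (w1 - e * a * w2) ^+ 2 + (w2 + e * a * w1) ^+ 2 <=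
  (z1 + e * a * w2) ^+ 2 + (z2 - e * a * w1) ^+ 2.
Proof.
move=> he ha h1 h2.
set X := z1 ^+ 2 + z2 ^+ 2; set W := w1 ^+ 2 + w2 ^+ 2.
set B := z2 * w1 - z1 * w2; set y := e * a * B.
have hX : 3 * W <= X by rewrite /X /W; nra.
have hW : 0 <= W by rewrite /W; nra.
have hL : B ^+ 2 <= X * W.
  rewrite -subr_ge0; have -> : X * W - B ^+ 2 = (z1 * w1 + z2 * w2) ^+ 2 by rewrite /X /W /B; ring.
  exact: sqr_ge0.
have hy : y ^+ 2 * 3 = B ^+ 2.
  have -> : y ^+ 2 * 3 = e ^+ 2 * (a ^+ 2 * 3) * B ^+ 2 by rewrite /y; ring.
  by rewrite he ha !mul1r.
have h3 : 4 * y ^+ 2 <= (X - W) ^+ 2 by nra.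
have h4 : 2 * y <= X - W by nra.
rewrite -subr_ge0.
have -> : (z1 + e * a * w2) ^+ 2 + (z2 - e * a * w1) ^+ 2 -
  ((w1 - e * a * w2) ^+ 2 + (w2 + e * a * w1) ^+ 2) = X - W - 2 * y.
  by rewrite /X /W /y /B; ring.
lra.
Qed.

Lemma side (a m1 m2 w1 w2 : R) : 0 < a < 1 ->
  0 <= m1 - w1 <= 1 -> 0 <= m2 - w2 <= 1 -> 0 <= m1 + w1 <= 1 -> 0 <= m2 + w2 <= 1 ->
  (0 <= m1 - a * w2 <= 1 /\ 0 <= m2 + a * w1 <= 1) \/
  (0 <= m1 + a * w2 <= 1 /\ 0 <= m2 - a * w1 <= 1).
Proof.
move=> /andP[a0 a1] /andP[h1 h2] /andP[h3 h4] /andP[h5 h6] /andP[h7 h8].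
have [x1 x2] : 0 <= (1 - a) * `|w1| /\ 0 <= (1-a) * `|w2|.
  by split; apply: mulr_ge0; rewrite ?normr_ge0 //; lra.
have [y1 y2] : a * w1 <= a * `|w1| /\ a * w2 <= a * `|w2|.
  by split; rewrite ler_pM2l // ler_norm.
have [z1 z2] : - (a * w1) <= a * `|w1| /\ - (a * w2) <= a * `|w2|.
  by split; rewrite -mulrN ler_pM2l // -normrN ler_norm.
have [n1 n2] : (`|w1| = w1 \/ `|w1| = - w1) /\ (`|w2| = w2 \/ `|w2| = - w2).
  by split; case: (real_ge0P (num_real _)) => H; rewrite ?ger0_norm ?ltr0_norm //; tauto.
case: (boolP ((0 <= m1 - a * w2 <= 1) && (0 <= m2 + a * w1 <= 1))) => [/andP[-> ->]| H]; first by left.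
right.
move: H; rewrite negb_and !negb_and -!ltNge.
move: x1 x2; rewrite !mulrBl !mul1r => x1 x2.
case/orP=>[/orP[]|/orP[]] H; split; apply/andP; split; case: n1 => n1; case: n2 => n2; rewrite n1 n2 in x1 x2 y1 y2 z1 z2; lra.
Qed.
End S.

Theorem lemma2 (R : realType) (k : nat) (hk : (2 <= k)%N)
  (p : 'I_k -> R * R) (p_inj : injective p)
  (p_in : forall i, unit_square (p i)) :
  GR p >= 2 / Num.sqrt 3
          - (2 `^ (3 / 2) / 3 `^ (3 / 4)) / Num.sqrt (k%:R).
Proof.
have hK : 0 <= (2 `^ (3 / 2) / 3 `^ (3 / 4)) / Num.sqrt (k%:R) :> R.
  by apply: divr_ge0; [apply: divr_ge0; apply: powR_ge0| apply: sqrtr_ge0].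
have h0k : (0 < k)%N by apply: leq_trans hk.
pose i0 : 'I_k := Ordinal h0k.
pose i1 : 'I_k := Ordinal hk.
pose F := fun x : 'I_k * 'I_k => dist2 (p x.1) (p x.2).
pose P := fun x : 'I_k * 'I_k => x.1 != x.2.
have Pi : P (i0, i1) by [].
case: (arg_minP F Pi) => [[a b]] /= hab hmin.
have hmin' : forall i j, i != j -> dist2 (p a) (p b) <= dist2 (p i) (p j).
  by move=> i j hij; exact: (hmin (i, j) hij).
have hab' : a != b := hab.
set m1 := ((p a).1 + (p b).1) / 2; set w1 := ((p b).1 - (p a).1) / 2.
set m2 := ((p a).2 + (p b).2) / 2; set w2 := ((p b).2 - (p a).2) / 2.
have ea1 : (p a).1 = m1 - w1 by rewrite /m1 /w1; lra.
have eb1 : (p b).1 = m1 + w1 by rewrite /m1 /w1; lra.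
have ea2 : (p a).2 = m2 - w2 by rewrite /m2 /w2; lra.
have eb2 : (p b).2 = m2 + w2 by rewrite /m2 /w2; lra.
clearbody m1 m2 w1 w2.
set W := w1 ^+ 2 + w2 ^+ 2.
have hd0 : dist2 (p a) (p b) = Num.sqrt (4 * W).
  by rewrite /dist2 ea1 eb1 ea2 eb2 /W; congr Num.sqrt; ring.
have hW : 0 < W.
  rewrite lt_def; apply/andP; split; last by rewrite /W; nra.
  apply/negP => /eqP W0.
  have [w10 w20] : w1 = 0 /\ w2 = 0 by split; rewrite /W in W0; nra.
  have E : forall u v : R * R, u.1 = v.1 -> u.2 = v.2 -> u = v by move=> [? ?] [? ?] /= -> ->.
  have /p_inj hab2 : p a = p b by apply: E; lra.
  by move: hab'; rewrite hab2 eqxx.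
have hr : r_P p = Num.sqrt (4 * W) / 2.
  rewrite /r_P; apply/eqP; rewrite eq_le; apply/andP; split.
    apply: ge_inf; last by exists a, b; split => //; rewrite hd0.
    exists (Num.sqrt (4 * W) / 2) => d [i [j [hij ->]]].
    by have := hmin' i j hij; rewrite hd0; lra.
  apply: lb_le_inf; first by exists (Num.sqrt (4 * W) / 2), a, b; rewrite hd0.
  by move=> d [i [j [hij ->]]]; have := hmin' i j hij; rewrite hd0; lra.
pose al : R := (Num.sqrt 3)^-1.
have hal3 : al ^+ 2 * 3 = 1 by rewrite /al exprVn sqr_sqrtr // mulVf //; lra.
have hal0 : 0 < al by rewrite /al invr_gt0 sqrtr_gt0.
have hal1 : al < 1 by nra.
have [e [he hc]] : exists e : R, e ^+ 2 = 1 /\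
    unit_square (m1 - e * al * w2, m2 + e * al * w1).
  move: (p_in a) (p_in b); rewrite /unit_square /= ea1 ea2 eb1 eb2 => -[ha1 ha2] [hb1 hb2].
  have hal : 0 < al < 1 by apply/andP.
  case: (@side R _ _ _ _ _ hal ha1 ha2 hb1 hb2) => [[h1 h2]|[h1 h2]].
    by exists 1; rewrite expr1n !mul1r.
  by exists (-1); rewrite sqrrN expr1n !mulN1r !mulNr opprK.
set c := (m1 - e * al * w2, m2 + e * al * w1) in hc.
pose rho := dist2 c (p a).
have hsq : forall u v : R, 0 <= u ^+ 2 + v ^+ 2 by move=> u v; nra.
have hrho : forall l, rho <= dist2 c (p l).
  move=> l; rewrite /rho /dist2 ler_sqrt //= ea1 ea2.
  case: (eqVneq l a) => [->|hla]; first by rewrite ea1 ea2.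
  case: (eqVneq l b) => [->|hlb].
    rewrite eb1 eb2 -subr_ge0.
    have -> : (m1 - e * al * w2 - (m1 + w1)) ^+ 2 + (m2 + e * al * w1 - (m2 + w2)) ^+ 2 -
      ((m1 - e * al * w2 - (m1 - w1)) ^+ 2 + (m2 + e * al * w1 - (m2 - w2)) ^+ 2) = 0 by ring.
    by [].
  have h1 := hmin' l a hla; have h2 := hmin' l b hlb.
  rewrite hd0 /dist2 ler_sqrt // in h1 h2.
  set z1 := (p l).1 - m1; set z2 := (p l).2 - m2.
  have el1 : (p l).1 = m1 + z1 by rewrite /z1; lra.
  have el2 : (p l).2 = m2 + z2 by rewrite /z2; lra.
  clearbody z1 z2.
  rewrite el1 el2 in h1 h2 *; rewrite ea1 ea2 eb1 eb2 in h1 h2.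
  have Q1 : (m1 + z1 - (m1 - w1)) = z1 + w1 by ring.
  have Q2 : (m2 + z2 - (m2 - w2)) = z2 + w2 by ring.
  have Q3 : (m1 + z1 - (m1 + w1)) = z1 - w1 by ring.
  have Q4 : (m2 + z2 - (m2 + w2)) = z2 - w2 by ring.
  rewrite Q1 Q2 in h1; rewrite Q3 Q4 in h2.
  rewrite ler_sqrt ?hsq // in h2.
  have K := @key R _ _ _ _ _ _ he hal3 h1 h2.
  have Q5 : (m1 - e * al * w2 - (m1 - w1)) ^+ 2 = (w1 - e * al * w2) ^+ 2 by ring.
  have Q6 : (m2 + e * al * w1 - (m2 - w2)) ^+ 2 = (w2 + e * al * w1) ^+ 2 by ring.
  have Q7 : (m1 - e * al * w2 - (m1 + z1)) ^+ 2 = (z1 + e * al * w2) ^+ 2 by ring.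
  have Q8 : (m2 + e * al * w1 - (m2 + z2)) ^+ 2 = (z2 - e * al * w1) ^+ 2 by ring.
  by rewrite Q5 Q6 Q7 Q8.
have hdP : rho <= dist_to_P p c.
  rewrite /dist_to_P; apply: lb_le_inf; first by exists rho, a.
  by move=> d [i ->]; exact: hrho.
have hRP : dist_to_P p c <= R_P p.
  rewrite /R_P; apply: sup_upper_bound; last by exists c.
  split; first by exists (dist_to_P p c), c.
  exists 2 => d [x [hx ->]].
  have h1 : dist_to_P p x <= dist2 x (p a).
    rewrite /dist_to_P; apply: ge_inf; last by exists a.
    by exists 0 => d' [i ->]; exact: sqrtr_ge0.
  apply: (le_trans h1); rewrite /dist2.
  have -> : (2 : R) = Num.sqrt (2 ^+ 2) by rewrite sqrtr_sqr ger0_norm.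
  rewrite ler_sqrt; last by nra.
  move: hx (p_in a); rewrite /unit_square => -[hx1 hx2] [hp1 hp2].
  move/andP: hx1 => [? ?]; move/andP: hx2 => [? ?]; move/andP: hp1 => [? ?]; move/andP: hp2 => [? ?].
  nra.
have hrd : al * Num.sqrt (4 * W) <= rho.
  have hal4 : 0 <= al * Num.sqrt (4 * W) by apply: mulr_ge0; [exact: ltW | exact: sqrtr_ge0].
  rewrite -(ger0_norm hal4) -sqrtr_sqr /rho /dist2 ler_sqrt //= ea1 ea2 exprMn sqr_sqrtr; last by nra.
  have Q5 : (m1 - e * al * w2 - (m1 - w1)) ^+ 2 = (w1 - e * al * w2) ^+ 2 by ring.
  have Q6 : (m2 + e * al * w1 - (m2 - w2)) ^+ 2 = (w2 + e * al * w1) ^+ 2 by ring.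
  rewrite Q5 Q6 -subr_ge0.
  have -> : (w1 - e * al * w2) ^+ 2 + (w2 + e * al * w1) ^+ 2 - al ^+ 2 * (4 * W)
     = W * (1 + e ^+ 2 * al ^+ 2 - 4 * al ^+ 2) by rewrite /W; ring.
  rewrite he mul1r; apply: mulr_ge0; [exact: ltW | nra].
have hs4 : 0 < Num.sqrt (4 * W) by rewrite sqrtr_gt0; nra.
have hGR : 2 * al <= GR p.
  rewrite /GR hr ler_pdivlMr; last by lra.
  have : al * Num.sqrt (4 * W) <= R_P p by apply: (le_trans hrd); apply: (le_trans hdP).
  lra.
have -> : 2 / Num.sqrt 3 = 2 * al by [].
lra.
Qed.
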